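(* Let $n$ be a positive integer, $f:\mathbb{Z}_n\to\mathbb C$, $1\le m\le n$ an integer, and $M=\{0,1,\dots,m-1\}\subseteq\mathbb{Z}_n$. Then \[\sum_{a\in\mathbb{Z}_n}\sum_{b\in\mathbb{Z}_n}|f(a+bM)|^2\ge\sum_{r\in\mathbb{Z}_n}|\widehat f(r)|^2\cdot\max\left(\frac{m^2\gcd(r,n)}{n},\,m\right).\]
   Context: The Fourier transform of $f:\mathbb{Z}_n\to\mathbb C$ is $\widehat f(s)=\sum_{x\in\mathbb{Z}_n}f(x)e^{-2\pi i xs/n}$. For $a,b\in\mathbb{Z}_n$, $a+bM$ denotes the multiset $\{a+bx: x\in M\}$ and $f(a+bM)=\sum_{x\in M}f(a+bx)$ (counted with multiplicity). For $r\in\mathbb{Z}_n$, $\gcd(r,n)$ is the gcd of $n$ with any integer representative of $r$ (so $\gcd(0,n)=n$). *)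

(* Defs.v *)
From HB Require Import structures.
From mathcomp Require Import all_boot all_order all_algebra.
From mathcomp Require Import reals trigo.
From mathcomp Require Import complex.
Set Implicit Arguments. Unset Strict Implicit. Unset Printing Implicit Defensive.
Import Order.TTheory GRing.Theory Num.Theory.
Local Open Scope ring_scope.
Local Open Scope complex_scope.

(* Z_n is represented by 'I_n (n > 0); a natural number k denotes k mod n. *)
Definition zn_at (R : realType) (n : nat) (f : 'I_n -> R[i]) (k : nat) : R[i] :=
  match @insub nat (fun j => j < n)%N 'I_n (k %% n)%N with
  | Some j => f j
  | None => 0
  end.

Definition expm2pi (R : realType) (t : R) : R[i] :=
  (cos (2 * pi * t)) -i* (sin (2 * pi * t)).

Definition fourier (R : realType) (n : nat) (f : 'I_n -> R[i]) (s : 'I_n) : R[i] :=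
  \sum_(x < n) f x * expm2pi ((x * s)%N%:R / n%:R).

Definition f_line (R : realType) (n : nat) (f : 'I_n -> R[i]) (m : nat)
    (a b : 'I_n) : R[i] :=
  \sum_(x < m) zn_at f (a + b * x)%N.

(* Main.v *)
Require Import Defs.
From HB Require Import structures.
From mathcomp Require Import all_boot all_order all_algebra.
From mathcomp Require Import reals trigo.
From mathcomp Require Import complex.
From mathcomp Require Import ring lra zify.
Import Order.TTheory GRing.Theory Num.Theory.
Local Open Scope ring_scope.
Local Open Scope complex_scope.

Lemma expm2piD (R : realType) (t u : R) : expm2pi (t + u) = expm2pi t * expm2pi u.
Proof.
rewrite /expm2pi mulrDr cosD sinD /=.
apply/eqP; rewrite eq_complex /=; apply/andP; split; apply/eqP; ring.
Qed.

Lemma expm2pi0 (R : realType) : expm2pi (0 : R) = 1.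
Proof. by rewrite /expm2pi mulr0 cos0 sin0 oppr0. Qed.

Lemma expm2pi1 (R : realType) : expm2pi (1 : R) = 1.
Proof. by rewrite /expm2pi mulr1 mulr_natl cos2pi sin2pi oppr0. Qed.

Lemma expm2pi_conj (R : realType) (t : R) : conjc (expm2pi t) * expm2pi t = 1.
Proof.
rewrite /expm2pi /=.
apply/eqP; rewrite eq_complex /=; apply/andP; split; apply/eqP.
  by rewrite -[RHS](cos2Dsin2 (2 * pi * t)); ring.
ring.
Qed.

Definition ee (R : realType) (n k : nat) : R[i] := expm2pi ((k%:R : R) / n%:R).

Lemma eeD (R : realType) n k l : ee R n (k + l) = ee R n k * ee R n l.
Proof. by rewrite /ee natrD mulrDl expm2piD. Qed.

Lemma ee0 (R : realType) n : ee R n 0 = 1.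
Proof. by rewrite /ee mul0r expm2pi0. Qed.

Lemma een (R : realType) n : (0 < n)%N -> ee R n n = 1.
Proof. by move=> hn; rewrite /ee divff ?expm2pi1 // pnatr_eq0 -lt0n. Qed.

Lemma eeM (R : realType) n k s : ee R n (k * s) = ee R n k ^+ s.
Proof.
elim: s => [|s IH]; first by rewrite muln0 ee0.
by rewrite mulnS eeD IH exprS.
Qed.

Lemma eemod (R : realType) n k : (0 < n)%N -> ee R n k = ee R n (k %% n).
Proof.
move=> hn; rewrite {1}(divn_eq k n) eeD mulnC eeM een // expr1n mul1r.
by [].
Qed.

Lemma eeconj (R : realType) n k : (0 < n)%N -> conjc (ee R n k) = ee R n (n - k %% n).
Proof.
move=> hn.
have h1 : ee R n k * ee R n (n - k %% n) = 1.
  by rewrite (@eemod R n k hn) -eeD subnKC ?een // ltnW // ltn_pmod.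
have h2 := @expm2pi_conj R ((k%:R : R) / n%:R).
rewrite -/(ee R n k) in h2.
by rewrite -[LHS]mulr1 -h1 mulrA h2 mul1r.
Qed.

Lemma cos_lt1 (R : realType) (t : R) : 0 < t < 1 -> cos (2 * pi * t) < 1.
Proof.
move=> /andP[t0 t1].
have hs : 0 < sin (pi * t).
  apply: sin_gt0_pi; apply/andP; split; first by rewrite mulr_gt0 // pi_gt0.
  by rewrite -[ltRHS]mulr1 ltr_pM2l // pi_gt0.
have -> : 2 * pi * t = (pi * t) *+ 2 by rewrite -mulrA mulr_natl.
rewrite cos_mulr2n cos2sin2.
have : 0 < sin (pi * t) ^+ 2 by rewrite exprn_gt0.
lra.
Qed.

Lemma ee_neq1 (R : realType) n k : (0 < n)%N -> ~~ (n %| k)%N -> ee R n k != 1.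
Proof.
move=> hn hk; rewrite (@eemod R n k hn).
have r0 : (0 < k %% n)%N by rewrite lt0n.
have rn : (k %% n < n)%N by rewrite ltn_pmod.
have n0 : (0 : R) < n%:R by rewrite ltr0n.
have hc : cos (2 * pi * ((k %% n)%:R / n%:R)) < 1 :> R.
  apply: cos_lt1; apply/andP; split.
    by rewrite divr_gt0 // ltr0n.
  by rewrite ltr_pdivrMr // mul1r ltr_nat.
rewrite /ee /expm2pi; apply/negP => /eqP[] hc1 _.
by move: hc; rewrite hc1 ltxx.
Qed.

Lemma sum_ee (R : realType) n k : (0 < n)%N ->
  \sum_(s < n) ee R n (k * s) = if (n %| k)%N then n%:R else 0.
Proof.
move=> hn; case: ifP => hk.
  rewrite (eq_bigr (fun _ => 1)); first by rewrite sumr_const card_ord.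
  move=> s _; rewrite eemod //; move/dvdnP: hk => [q ->].
  by rewrite mulnAC modnMl ee0.
under eq_bigr do rewrite eeM.
have hz := @ee_neq1 R n k hn (negbT hk).
have : (ee R n k - 1) * \sum_(i < n) ee R n k ^+ i = 0.
  by rewrite -subrX1 -eeM mulnC eeM een // expr1n subrr.
by move/eqP; rewrite mulf_eq0 subr_eq0 (negbTE hz) /= => /eqP.
Qed.

Lemma modshift (n a c y : nat) : (0 < n)%N ->
  ((a + c + (y + (n - c %% n))) %% n = (a + y) %% n)%N.
Proof.
move=> hn.
have hr : (c %% n < n)%N by rewrite ltn_pmod.
have -> : (a + c + (y + (n - c %% n)) = (c %/ n).+1 * n + (a + y))%N.
  rewrite {1}(divn_eq c n) mulSn; set q := (c %/ n * n)%N. lia.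
by rewrite modnMDl.
Qed.

Lemma conjcX (R : realType) (x : R[i]) s : conjc (x ^+ s) = (conjc x)^+s.
Proof. exact: rmorphXn. Qed.

Lemma orth (R : realType) n p q : (0 < n)%N ->
  \sum_(s < n) ee R n (p * s) * conjc (ee R n (q * s)) =
  if p == q %[mod n] then n%:R else 0.
Proof.
move=> hn.
under eq_bigr => s _ do
  rewrite eeM (eeM R n q) conjcX eeconj // -exprMn -eeD -eeM.
rewrite sum_ee //.
have hr : (q %% n <= n)%N by rewrite ltnW // ltn_pmod.
congr (if _ then _ else _).
have e : (p == q %[mod n]) = (p == q %% n %[mod n]) by rewrite modn_mod.
by rewrite e -(eqn_modDr (n - q %% n)) subnKC // modnn.
Qed.

Lemma conjcM (R : realType) (x y : R[i]) : conjc (x * y) = conjc x * conjc y.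
Proof. exact: rmorphM. Qed.

Lemma conjc_sum (R : realType) n (F : 'I_n -> R[i]) :
  conjc (\sum_(i < n) F i) = \sum_(i < n) conjc (F i).
Proof. exact: rmorph_sum. Qed.

Lemma zn_atE (R : realType) n (f : 'I_n -> R[i]) (hn : (0 < n)%N) k :
  zn_at f k = f (Ordinal (ltn_pmod k hn)).
Proof.
rewrite /zn_at; case: insubP => [u _ hu|]; last by rewrite ltn_pmod.
by congr f; apply: val_inj; rewrite /= hu.
Qed.

Lemma zn_at_congr (R : realType) n (f : 'I_n -> R[i]) (hn : (0 < n)%N) k l :
  (k %% n = l %% n)%N -> zn_at f k = zn_at f l.
Proof.
move=> e; rewrite !(@zn_atE _ _ f hn); congr f; exact: val_inj.
Qed.

Lemma zn_at_ord (R : realType) n (f : 'I_n -> R[i]) (hn : (0 < n)%N) (u : 'I_n) :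
  zn_at f u = f u.
Proof.
rewrite (@zn_atE _ _ f hn); congr f; apply: val_inj; rewrite /= modn_small //.
Qed.

Lemma identA (R : realType) n (f : 'I_n -> R[i]) (hn : (0 < n)%N) (c y : nat) :
  \sum_(a < n) zn_at f (a + c) * conjc (zn_at f (a + y)) =
  \sum_(u < n) f u * conjc (zn_at f (u + (y + (n - c %% n)))).
Proof.
pose h (a : 'I_n) : 'I_n := Ordinal (ltn_pmod (a + c) hn).
have inj_h : injective h.
  move=> a a' /(congr1 val) /= /eqP.
  rewrite eqn_modDr => /eqP; rewrite !modn_small // => e.
  exact: val_inj.
rewrite [RHS](reindex_inj inj_h); apply: eq_bigr => a _.
congr (_ * conjc _); first by rewrite (@zn_atE _ _ f hn).
apply: (@zn_at_congr _ _ f hn) => /=.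
by rewrite modnDml modshift.
Qed.

Lemma fourierE (R : realType) n (f : 'I_n -> R[i]) (s : 'I_n) :
  fourier f s = \sum_(u < n) f u * ee R n (u * s).
Proof. by []. Qed.

Lemma expand2 (R : realType) n (a b : 'I_n -> R[i]) K :
  (\sum_(u < n) a u) * (\sum_(v < n) b v) * K = \sum_(u < n) \sum_(v < n) a u * b v * K.
Proof.
rewrite mulr_suml mulr_suml; apply: eq_bigr => u _.
by rewrite mulr_sumr mulr_suml.
Qed.

Lemma identB (R : realType) n (f : 'I_n -> R[i]) (hn : (0 < n)%N) (c y : nat) :
  \sum_(s < n) (fourier f s * conjc (fourier f s)) *
     (ee R n (y * s) * conjc (ee R n (c * s))) =
  n%:R * \sum_(u < n) f u * conjc (zn_at f (u + (y + (n - c %% n)))).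
Proof.
under eq_bigr => s _ do rewrite !fourierE conjc_sum expand2.
rewrite exchange_big mulr_sumr; apply: eq_bigr => u _.
rewrite exchange_big /=.
have hterm : forall (s v : 'I_n),
  f u * ee R n (u * s) * conjc (f v * ee R n (v * s)) *
    (ee R n (y * s) * conjc (ee R n (c * s))) =
  (f u * conjc (f v)) * (ee R n ((u + y) * s) * conjc (ee R n ((v + c) * s))).
  by move=> s v; rewrite !mulnDl !eeD !conjcM; ring.
under eq_bigr => v _ do (under eq_bigr => s _ do rewrite hterm; rewrite -mulr_sumr orth //).
pose d := (y + (n - c %% n))%N.
pose v0 : 'I_n := Ordinal (ltn_pmod (u + d) hn).
have hv : forall v : 'I_n, (u + y == v + c %[mod n]) = (v == v0).
  move=> v; rewrite -val_eqE /= -[X in _ = (X == _)](modn_small (ltn_ord v)).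
  rewrite -[in RHS](eqn_modDr c) /d addnAC modshift //.
rewrite (bigD1 v0) // big1 ?addr0; last first.
  by move=> v /negbTE hvv; rewrite hv hvv mulr0.
rewrite hv eqxx (@zn_atE _ _ f hn) /v0 /d.
rewrite -[LHS]/(f u * conjc (f v0) * n%:R + 0) addr0 /v0 /d.
ring.
Qed.

Lemma CS (R : realDomainType) d (F : 'I_d -> R) :
  (\sum_(i < d) F i) ^+ 2 <= d%:R * \sum_(i < d) F i ^+ 2.
Proof.
have h0 : 0 <= \sum_(i < d) \sum_(j < d) (F i - F j) ^+ 2.
  by apply: sumr_ge0 => i _; apply: sumr_ge0 => j _; exact: sqr_ge0.
have e : \sum_(i < d) \sum_(j < d) (F i - F j) ^+ 2 =
   (d%:R * \sum_(i < d) F i ^+ 2) *+ 2 - ((\sum_(i < d) F i) ^+ 2) *+ 2.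
  have e1 : forall i, \sum_(j < d) (F i - F j) ^+ 2 =
     d%:R * F i ^+ 2 - (F i * \sum_(j < d) F j) *+ 2 + \sum_(j < d) F j ^+ 2.
    move=> i; under eq_bigr do rewrite sqrrB.
    rewrite big_split /= sumrB sumr_const card_ord sumrMnl -mulr_sumr.
    by rewrite mulr_natl.
  under eq_bigr do rewrite e1.
  rewrite big_split /= sumrB sumr_const card_ord sumrMnl -mulr_sumr -mulr_suml.
  rewrite -expr2 -[(\sum_(j < d) F j ^+ 2) *+ d]mulr_natl.
  by rewrite addrAC -mulr2n.
have : 0 <= (d%:R * \sum_(i < d) F i ^+ 2) *+ 2 - ((\sum_(i < d) F i) ^+ 2) *+ 2.
  by rewrite -e.
by rewrite subr_ge0 ler_pMn2r.
Qed.

Lemma sum_ind (d : nat) (hd : (0 < d)%N) (a : nat) (G : 'I_d -> nat) :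
  (\sum_(c < d) (a %% d == c) * G c = G (Ordinal (ltn_pmod a hd)))%N.
Proof.
rewrite (bigD1 (Ordinal (ltn_pmod a hd))) //= eqxx mul1n big1 ?addn0 // => c hc.
suff -> : (a %% d == c)%N = false by [].
apply/negbTE; apply: contra hc => /eqP h; apply/eqP; apply: val_inj => /=.
by rewrite h.
Qed.

Lemma countK (d m : nat) (hd : (0 < d)%N) :
  (m ^ 2 <= d * \sum_(x < m) \sum_(y < m) (x %% d == y %% d))%N.
Proof.
pose k (c : 'I_d) := (\sum_(x < m) (x %% d == c))%N.
have hsum : (\sum_(c < d) k c = m)%N.
  rewrite /k exchange_big /=.
  rewrite (eq_bigr (fun _ => 1%N)) ?sum_nat_const ?card_ord ?muln1 // => x _.
  have := @sum_ind _ hd x (fun _ => 1%N).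
  by move=> <-; apply: eq_bigr => c _; rewrite muln1.
have hsq : (\sum_(x < m) \sum_(y < m) (x %% d == y %% d) = \sum_(c < d) k c ^ 2)%N.
  under [RHS]eq_bigr => c _ do rewrite /k expnS expn1 big_distrl /=.
  under [RHS]eq_bigr => c _ do under eq_bigr => z _ do rewrite big_distrr /=.
  rewrite [RHS]exchange_big /=; apply: eq_bigr => x _.
  rewrite [RHS]exchange_big /=; apply: eq_bigr => y _.
  have := @sum_ind _ hd x (fun c : 'I_d => ((y %% d)%N == c : nat)).
  by move=> /= ->; rewrite eq_sym.
rewrite hsq.
have := @CS rat d (fun c => (k c)%:R).
rewrite -natr_sum hsum.
under eq_bigr do rewrite -natrX.
by rewrite -natr_sum -natrX -natrM ler_nat.
Qed.

Lemma Nbound2 (n m s : nat) :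
  (m <= \sum_(x < m) \sum_(y < m) (y * s == x * s %[mod n]))%N.
Proof.
rewrite -[X in (X <= _)%N]card_ord -sum1_card.
apply: leq_sum => x _.
by rewrite (bigD1 x) //= eqxx.
Qed.

Lemma Nbound (n m s : nat) (hn : (0 < n)%N) :
  (m ^ 2 * gcdn s n <= n * \sum_(x < m) \sum_(y < m) (y * s == x * s %[mod n]))%N.
Proof.
set g := gcdn s n.
have g0 : (0 < g)%N by rewrite gcdn_gt0 hn orbT.
set d := (n %/ g)%N.
have hnd : n = (d * g)%N by rewrite divnK // dvdn_gcdr.
have d0 : (0 < d)%N by move: hn; rewrite hnd muln_gt0 => /andP[].
have hs : s = (s %/ g * g)%N by rewrite divnK // dvdn_gcdl.
have claim : forall x y : nat, (x %% d == y %% d)%N -> (y * s == x * s %[mod n]).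
  move=> x y /eqP hxy.
  rewrite hnd hs !mulnA -!muln_modl.
  by rewrite -(modnMml y) -(modnMml x) hxy.
apply: (@leq_trans (g * (d * \sum_(x < m) \sum_(y < m) (x %% d == y %% d)))).
  by rewrite mulnC leq_mul2l countK // orbT.
rewrite mulnA [(g * d)%N]mulnC -hnd leq_mul2l; apply/orP; right.
apply: leq_sum => x _; apply: leq_sum => y _.
by case: eqP => // /eqP /claim ->.
Qed.

Lemma normCK' (R : realType) (z : R[i]) : `|z| ^+ 2 = z * conjc z.
Proof. exact: normCK. Qed.

Lemma sqsum (R : realType) k (G : 'I_k -> R[i]) :
  (\sum_(x < k) G x) * conjc (\sum_(y < k) G y) =
  \sum_(x < k) \sum_(y < k) G x * conjc (G y).
Proof.
rewrite conjc_sum mulr_suml; apply: eq_bigr => x _; by rewrite mulr_sumr.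
Qed.

Definition Z (R : realType) n (f : 'I_n -> R[i]) m :=
  \sum_(b < n) \sum_(x < m) \sum_(y < m) \sum_(s < n)
     (fourier f s * conjc (fourier f s)) *
     (ee R n ((b * y) * s) * conjc (ee R n ((b * x) * s))).

Arguments Z {R n} f m.

Lemma lhsZ (R : realType) n (f : 'I_n -> R[i]) m (hn : (0 < n)%N) :
  \sum_(a < n) \sum_(b < n) `|f_line f m a b| ^+ 2 = (n%:R)^-1 * Z f m.
Proof.
have n0 : (n%:R : R[i]) != 0 by rewrite pnatr_eq0 -lt0n.
under eq_bigr do under eq_bigr do rewrite normCK' /f_line sqsum.
rewrite exchange_big /Z mulr_sumr; apply: eq_bigr => b _.
rewrite exchange_big mulr_sumr; apply: eq_bigr => x _.
rewrite exchange_big mulr_sumr; apply: eq_bigr => y _.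
rewrite (@identA _ _ f hn) (@identB _ _ f hn) mulKf //.
Qed.

Lemma rhsZ (R : realType) n (f : 'I_n -> R[i]) m (hn : (0 < n)%N) :
  \sum_(s < n) (fourier f s * conjc (fourier f s)) *
     (\sum_(x < m) \sum_(y < m) (y * s == x * s %[mod n]))%N%:R
  = (n%:R)^-1 * Z f m.
Proof.
have n0 : (n%:R : R[i]) != 0 by rewrite pnatr_eq0 -lt0n.
have E1 : forall s : 'I_n,
  ((\sum_(x < m) \sum_(y < m) (y * s == x * s %[mod n]))%N%:R : R[i]) =
  (n%:R)^-1 * \sum_(x < m) \sum_(y < m) \sum_(b < n)
      ee R n ((b * y) * s) * conjc (ee R n ((b * x) * s)).
  move=> s; rewrite natr_sum mulr_sumr; apply: eq_bigr => x _.
  rewrite natr_sum mulr_sumr; apply: eq_bigr => y _.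
  under eq_bigr => b _ do rewrite (mulnC b y) -mulnA (mulnC b s) mulnA
     (mulnC b x) -(mulnA x b s) (mulnC b s) mulnA.
  rewrite orth //; case: ifP => _; last by rewrite mulr0.
  by rewrite mulVf.
under eq_bigr => s _ do rewrite E1 mulrCA.
rewrite -mulr_sumr /Z; congr (_ * _).
under eq_bigr => s _ do (rewrite mulr_sumr; under eq_bigr => x _ do
  (rewrite mulr_sumr; under eq_bigr => y _ do rewrite mulr_sumr)).
rewrite [LHS]exchange_big [RHS]exchange_big; apply: eq_bigr => x _ /=.
rewrite [LHS]exchange_big [RHS]exchange_big; apply: eq_bigr => y _ /=.
by rewrite [LHS]exchange_big.
Qed.

Lemma natC (R : realType) k : ((k%:R : R)%:C) = (k%:R : R[i]).
Proof. exact: rmorph_nat. Qed.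

Theorem lemma4p2 (R : realType) (n : nat) (f : 'I_n -> R[i]) (m : nat)
    (hn : (0 < n)%N) (hm1 : (1 <= m)%N) (hmn : (m <= n)%N) :
  \sum_(a < n) \sum_(b < n) `|f_line f m a b| ^+ 2
  >= \sum_(r < n) `|fourier f r| ^+ 2 *
       (Num.max ((m ^ 2 * gcdn r n)%N%:R / n%:R) (m%:R : R))%:C.
Proof.
rewrite (@lhsZ _ _ f m hn) -(@rhsZ _ _ f m hn).
apply: ler_sum => s _.
rewrite -normCK'; apply: ler_wpM2l; first by rewrite exprn_ge0 // normr_ge0.
rewrite -natC lecR ge_max; apply/andP; split.
  rewrite ler_pdivrMr ?ltr0n // -natrM ler_nat [(_ * n)%N]mulnC.
  exact: Nbound.
by rewrite (ler_nat R) Nbound2.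
Qed.
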